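(* Let $(X,d)$ be a perfect computable metric space with special points $\{q_i\}_{i\in\omega}$, and let $\mathcal{C}\subseteq X$ be $\Pi^0_1(\emptyset')$ with respect to $(X,d)$. Then there is a c.e. set $D\subseteq\{q_i\}_{i\in\omega}$ of special points such that $\mathcal{C}$ is exactly the set of limit points of $D$ in $(X,d)$.
   Context: A computable metric space is a metric space $(X,d)$ with a dense sequence $\{q_i\}$ of special points such that $d(q_i,q_j)$ is a computable real uniformly in $i,j$. It is perfect if it has no isolated points. Basic open balls are $B(q_i,2^{-j})$, enumerated computably. $\mathcal{C}\subseteq X$ is $\Pi^0_1(\emptyset')$ if there is a $\Sigma^0_2$ set $I\subseteq\omega$ of indices of basic open balls with $X\setminus\mathcal{C}=\bigcup_{k\in I}B_k$. A set $D$ of special points is c.e. if the set of their indices is c.e. A point $x$ is a limit point of $D$ if every open ball around $x$ contains a point of $D$ different from $x$. *)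

(* Defs.v *)
From Stdlib Require Import Reals List Arith Cantor.
Import ListNotations.
Open Scope R_scope.

Inductive code : Type :=
  | CZero : code
  | CSucc : code
  | CProj : nat -> code
  | CComp : code -> list code -> code
  | CPRec : code -> code -> code
  | CMu   : code -> code.

Inductive eval : code -> list nat -> nat -> Prop :=
  | ev_zero v : eval CZero v 0
  | ev_succ v : eval CSucc v (S (nth 0 v 0%nat))
  | ev_proj i v : eval (CProj i) v (nth i v 0%nat)
  | ev_comp f gs v ws y :
      evals gs v ws -> eval f ws y -> eval (CComp f gs) v y
  | ev_prec0 b s v y : eval b v y -> eval (CPRec b s) (0%nat :: v) y
  | ev_precS b s n v y z :
      eval (CPRec b s) (n :: v) y -> eval s (n :: y :: v) z ->
      eval (CPRec b s) (S n :: v) z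
  | ev_mu f v n :
      eval f (n :: v) 0%nat ->
      (forall m, (m < n)%nat -> exists k, eval f (m :: v) (S k)) ->
      eval (CMu f) v n
with evals : list code -> list nat -> list nat -> Prop :=
  | evs_nil v : evals [] v []
  | evs_cons g gs v w ws : eval g v w -> evals gs v ws -> evals (g :: gs) v (w :: ws).

Definition ce (A : nat -> Prop) : Prop :=
  exists e : code, forall n, A n <-> exists y, eval e [n] y.

(** Sigma^0_2 subsets of nat: n in A iff exists m forall k R(n,m,k), R computable
    (given by a total recursive function, output 0 meaning "true"). *)
Definition sigma02 (A : nat -> Prop) : Prop :=
  exists e : code,
    (forall n m k, exists y, eval e [n; m; k] y) /\
    (forall n, A n <-> exists m, forall k, eval e [n; m; k] 0%nat).

Definition zigzag (a : nat) : Z :=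
  if Nat.even a then Z.of_nat (Nat.div2 a) else (- Z.of_nat (S (Nat.div2 a)))%Z.

Definition decodeQ (n : nat) : R :=
  let '(a, b) := Cantor.of_nat n in IZR (zigzag a) / INR (S b).

Definition dense_seq (X : Metric_Space) (q : nat -> Base X) : Prop :=
  forall (x : Base X) (eps : R), eps > 0 -> exists i, dist X x (q i) < eps.

Definition computable_metric_space (X : Metric_Space) (q : nat -> Base X) : Prop :=
  dense_seq X q /\
  exists e : code, forall i j n : nat, exists r : nat,
    eval e [i; j; n] r /\
    Rabs (decodeQ r - dist X (q i) (q j)) <= / 2 ^ n.

Definition perfect (X : Metric_Space) : Prop :=
  forall (x : Base X) (eps : R), eps > 0 ->
    exists y : Base X, y <> x /\ dist X x y < eps.

Definition basic_ball (X : Metric_Space) (q : nat -> Base X) (k : nat) (x : Base X) : Prop :=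
  let '(i, j) := Cantor.of_nat k in dist X x (q i) < / 2 ^ j.

(** C is Pi^0_1(emptyset'): X \ C is the union of a Sigma^0_2 set of basic balls. *)
Definition pi01_jump (X : Metric_Space) (q : nat -> Base X) (C : Base X -> Prop) : Prop :=
  exists I : nat -> Prop, sigma02 I /\
    forall x : Base X, ~ C x <-> exists k, I k /\ basic_ball X q k x.

Definition limit_point (X : Metric_Space) (q : nat -> Base X) (W : nat -> Prop) (x : Base X) : Prop :=
  forall eps : R, eps > 0 -> exists i, W i /\ q i <> x /\ dist X x (q i) < eps.

(* Main.v *)
Require Import Defs.
From Stdlib Require Import Reals Lra List Arith Lia Cantor Classical IndefiniteDescription.
Import ListNotations.
Open Scope nat_scope.

Section CodeInd.
Variable P : code -> Prop.
Hypothesis HZ : P CZero.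
Hypothesis HS : P CSucc.
Hypothesis HP : forall i, P (CProj i).
Hypothesis HC : forall f gs, P f -> Forall P gs -> P (CComp f gs).
Hypothesis HR : forall b s, P b -> P s -> P (CPRec b s).
Hypothesis HM : forall f, P f -> P (CMu f).
Fixpoint code_ind2 (c : code) : P c :=
  match c with
  | CZero => HZ | CSucc => HS | CProj i => HP i
  | CComp f gs => HC f gs (code_ind2 f)
      ((fix F (l : list code) : Forall P l :=
         match l with [] => Forall_nil _ | g :: l => Forall_cons _ (code_ind2 g) (F l) end) gs)
  | CPRec b s => HR b s (code_ind2 b) (code_ind2 s)
  | CMu f => HM f (code_ind2 f)
  end.
End CodeInd.

Lemma eval_det : forall c v y, eval c v y -> forall y', eval c v y' -> y = y'.
Proof.
  induction c using code_ind2; intros v y E y' E'.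
  - inversion E; inversion E'; subst; auto.
  - inversion E; inversion E'; subst; auto.
  - inversion E; inversion E'; subst; auto.
  - inversion E as [| | |? ? ? ws y0 Hs Hf| | |]; subst.
    inversion E' as [| | |? ? ? ws' y1 Hs' Hf'| | |]; subst.
    assert (ws = ws').
    { clear E E' Hf Hf'. revert ws ws' Hs Hs'. induction H; intros ws ws' E1 E2.
      - inversion E1; inversion E2; subst; auto.
      - inversion E1; subst; inversion E2; subst. f_equal; eauto. }
    subst. eauto.
  - revert v y y' E E'. intros v. destruct v as [|n w]; intros y y' E E'.
    { inversion E. }
    revert y y' E E'. induction n; intros y y' E E'.
    + inversion E; subst; inversion E'; subst; eauto.
    + inversion E; subst; inversion E'; subst.
      assert (y0 = y1) by eauto. subst. eauto.
  - inversion E; subst; inversion E'; subst.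
    destruct (Nat.lt_trichotomy y y') as [Hl|[Hl|Hl]]; auto.
    + destruct (H3 _ Hl) as [k Hk]. specialize (IHc _ _ H0 _ Hk). discriminate.
    + destruct (H1 _ Hl) as [k Hk]. specialize (IHc _ _ H2 _ Hk). discriminate.
Qed.
Definition TOT (c : code) (F : list nat -> nat) := forall v, eval c v (F v).

Inductive ex : Type :=
  | EZ | ES | EP (i : nat) | EC (f : ex) (gs : list ex)
  | ER (b s n : ex) (gs : list ex)
  | EK (c : code) (F : list nat -> nat)
  | EM (f : ex) (M : list nat -> nat).

Fixpoint prf (B S : list nat -> nat) (n : nat) (w : list nat) : nat :=
  match n with 0 => B w | S n' => S (n' :: prf B S n' w :: w) end.

Fixpoint den (e : ex) (v : list nat) : nat :=
  match e with
  | EZ => 0 | ES => S (nth 0 v 0) | EP i => nth i v 0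
  | EC f gs => den f (map (fun g => den g v) gs)
  | ER b s n gs => prf (den b) (den s) (den n v) (map (fun g => den g v) gs)
  | EK _ F => F v
  | EM _ M => M v
  end.

Fixpoint cmp (e : ex) : code :=
  match e with
  | EZ => CZero | ES => CSucc | EP i => CProj i
  | EC f gs => CComp (cmp f) (map cmp gs)
  | ER b s n gs => CComp (CPRec (cmp b) (cmp s)) (cmp n :: map cmp gs)
  | EK c _ => c
  | EM f _ => CMu (cmp f)
  end.

Fixpoint okx (e : ex) : Prop :=
  match e with
  | EZ | ES | EP _ => True
  | EC f gs => okx f /\ (fix okl (l : list ex) : Prop :=
                          match l with [] => True | g :: l => okx g /\ okl l end) gs
  | ER b s n gs => okx b /\ okx s /\ okx n /\ (fix okl (l : list ex) : Prop :=
                          match l with [] => True | g :: l => okx g /\ okl l end) gs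
  | EK c F => TOT c F
  | EM f M => okx f /\ forall v, den f (M v :: v) = 0 /\
                forall m, m < M v -> den f (m :: v) <> 0
  end.

Section ExInd.
Variable P : ex -> Prop.
Hypothesis HZ : P EZ.
Hypothesis HS : P ES.
Hypothesis HP : forall i, P (EP i).
Hypothesis HC : forall f gs, P f -> Forall P gs -> P (EC f gs).
Hypothesis HR : forall b s n gs, P b -> P s -> P n -> Forall P gs -> P (ER b s n gs).
Hypothesis HK : forall c F, P (EK c F).
Hypothesis HM : forall f M, P f -> P (EM f M).
Fixpoint ex_ind2 (e : ex) : P e :=
  let fl := (fix F (l : list ex) : Forall P l :=
         match l with [] => Forall_nil _ | g :: l => Forall_cons _ (ex_ind2 g) (F l) end) in
  match e with
  | EZ => HZ | ES => HS | EP i => HP i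
  | EC f gs => HC f gs (ex_ind2 f) (fl gs)
  | ER b s n gs => HR b s n gs (ex_ind2 b) (ex_ind2 s) (ex_ind2 n) (fl gs)
  | EK c F => HK c F
  | EM f M => HM f M (ex_ind2 f)
  end.
End ExInd.

Lemma evals_map : forall gs v,
  Forall (fun g => okx g -> TOT (cmp g) (den g)) gs ->
  (fix okl (l : list ex) : Prop := match l with [] => True | g :: l => okx g /\ okl l end) gs ->
  evals (map cmp gs) v (map (fun g => den g v) gs).
Proof.
  induction gs; simpl; intros v HF Hok.
  - constructor.
  - inversion HF; subst. destruct Hok. constructor; auto. apply H1; auto.
Qed.

Lemma prf_eval : forall b s B S, TOT b B -> TOT s S ->
  forall n w, eval (CPRec b s) (n :: w) (prf B S n w).
Proof.
  intros b s B S Hb Hs n w. induction n; simpl.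
  - constructor. apply Hb.
  - econstructor. apply IHn. apply Hs.
Qed.

Lemma cmp_ok : forall e, okx e -> TOT (cmp e) (den e).
Proof.
  induction e using ex_ind2; simpl; intros Hok v.
  - constructor.
  - constructor.
  - constructor.
  - destruct Hok as [Hf Hl]. econstructor. apply evals_map; eauto. apply IHe; auto.
  - destruct Hok as (Hb & Hs & Hn & Hl). econstructor.
    + constructor. apply IHe3; auto. apply evals_map; eauto.
    + apply prf_eval; auto.
  - apply Hok.
  - destruct Hok as [Hf HM]. destruct (HM v) as [H0 H1]. constructor.
    + rewrite <- H0. apply IHe; auto.
    + intros m Hm. specialize (H1 m Hm). destruct (den e (m :: v)) eqn:E; [congruence|].
      exists n. rewrite <- E. apply IHe; auto.
Qed.

Fixpoint xc (n : nat) : ex := match n with 0 => EZ | S n => EC ES [xc n] end.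
Lemma den_xc n v : den (xc n) v = n.
Proof. induction n; simpl; auto. Qed.
Arguments xc : simpl never.

Definition xadd (a b : ex) := ER (EP 0) (EC ES [EP 1]) a [b].
Lemma den_xadd a b v : den (xadd a b) v = den a v + den b v.
Proof. unfold xadd. cbn [den prf map nth]. induction (den a v); cbn [den prf map nth]; auto; lia. Qed.
Arguments xadd : simpl never.

Definition xmul (a b : ex) := ER EZ (xadd (EP 1) (EP 2)) a [b].
Lemma den_xmul a b v : den (xmul a b) v = den a v * den b v.
Proof. unfold xmul. cbn [den prf map nth]. induction (den a v); cbn [den prf map nth]; auto.
  rewrite den_xadd. cbn [den prf map nth]. rewrite IHn. lia. Qed.
Arguments xmul : simpl never.

Definition xpred (a : ex) := ER EZ (EP 0) a [].
Lemma den_xpred a v : den (xpred a) v = pred (den a v).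
Proof. unfold xpred. cbn [den prf map nth]. destruct (den a v); cbn [den prf map nth]; auto; lia. Qed.
Arguments xpred : simpl never.

Definition xsub (a b : ex) := ER (EP 0) (xpred (EP 1)) b [a].
Lemma den_xsub a b v : den (xsub a b) v = den a v - den b v.
Proof. unfold xsub. cbn [den prf map nth]. induction (den b v); cbn [den prf map nth]. lia.
  rewrite den_xpred. cbn [den prf map nth]. rewrite IHn. lia. Qed.
Arguments xsub : simpl never.

Definition xnot a := xsub (xc 1) a.
Lemma den_xnot a v : den (xnot a) v = 1 - den a v.
Proof. unfold xnot. rewrite den_xsub, den_xc. auto. Qed.
Arguments xnot : simpl never.

Definition xlt a b := xsub b a.
Lemma den_xlt a b v : den (xlt a b) v <> 0 <-> den a v < den b v.
Proof. unfold xlt. rewrite den_xsub. lia. Qed.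
Arguments xlt : simpl never.

Definition xpow2 a := ER (xc 1) (xadd (EP 1) (EP 1)) a [].
Lemma den_xpow2 a v : den (xpow2 a) v = 2 ^ den a v.
Proof. unfold xpow2. cbn [den prf map nth]. induction (den a v); cbn [den prf map nth]. apply den_xc.
  rewrite den_xadd. cbn [den prf map nth]. rewrite IHn. simpl. lia. Qed.
Arguments xpow2 : simpl never.

Definition xmod2 a := ER EZ (xnot (EP 1)) a [].
Lemma den_xmod2 a v : den (xmod2 a) v = Nat.b2n (Nat.odd (den a v)).
Proof. unfold xmod2. cbn [den prf map nth]. induction (den a v); cbn [den prf map nth]. auto.
  rewrite den_xnot. cbn [den prf map nth]. rewrite IHn. rewrite Nat.odd_succ, <- Nat.negb_odd.
  destruct (Nat.odd n); auto. Qed.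
Arguments xmod2 : simpl never.

Lemma div2_S : forall n, Nat.div2 (S n) = Nat.div2 n + Nat.b2n (Nat.odd n).
Proof. assert (forall n, (Nat.div2 (S n) = Nat.div2 n + Nat.b2n (Nat.odd n)) /\ (Nat.div2 (S (S n)) = Nat.div2 (S n) + Nat.b2n (Nat.odd (S n)))).
  { induction n. split; reflexivity. destruct IHn as [H1 H2]. split; auto.
    change (Nat.div2 (S (S (S n)))) with (S (Nat.div2 (S n))).
    rewrite H2. rewrite Nat.odd_succ, Nat.odd_succ, Nat.even_succ.
    change (Nat.div2 (S (S n))) with (S (Nat.div2 n)) in *. rewrite H1 in *.
    rewrite <- Nat.negb_odd in *. rewrite ?Nat.odd_succ, <- ?Nat.negb_odd in *. destruct (Nat.odd n); simpl in *; lia. }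
  intros n; apply H. Qed.
Definition xdiv2 a := ER EZ (xadd (EP 1) (xmod2 (EP 0))) a [].
Lemma den_xdiv2 a v : den (xdiv2 a) v = Nat.div2 (den a v).
Proof. unfold xdiv2. cbn [den prf map nth]. induction (den a v) as [|n IH]; cbn [den prf map nth]. auto.
  rewrite den_xadd, den_xmod2. cbn [den prf map nth]. rewrite IH. rewrite div2_S. auto. Qed.
Arguments xdiv2 : simpl never.

Definition xtb (M m : ex) := xmod2 (ER (EP 0) (xdiv2 (EP 1)) m [M]).
Lemma iter_div2 : forall m a, Nat.testbit a m = Nat.odd (Nat.iter m Nat.div2 a).
Proof. induction m; intros a. reflexivity. change (Nat.testbit a (S m)) with (Nat.testbit (Nat.div2 a) m).
  rewrite IHm. rewrite Nat.iter_succ_r. reflexivity. Qed.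
Lemma den_xtb M m v : den (xtb M m) v = Nat.b2n (Nat.testbit (den M v) (den m v)).
Proof. unfold xtb. rewrite den_xmod2. rewrite iter_div2. f_equal. f_equal.
  cbn [den prf map nth]. induction (den m v); cbn [den prf map nth]; auto. rewrite den_xdiv2. cbn [den prf map nth]. rewrite IHn. reflexivity. Qed.
Arguments xtb : simpl never.

Fixpoint prodf (n : nat) (f : nat -> nat) : nat :=
  match n with 0 => 1 | S n => prodf n f * f n end.
Lemma prodf_nz n f : prodf n f <> 0 <-> forall k, k < n -> f k <> 0.
Proof. induction n; simpl. split; intros; auto; lia.
  split.
  - intros H k Hk. assert (k < n \/ k = n) as [Hk'|Hk'] by lia.
    + apply IHn; auto. intro E; apply H; rewrite E; auto.
    + subst. intro E; apply H; rewrite E; lia.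
  - intros H E. apply Nat.mul_eq_0 in E. destruct E as [E|E].
    + revert E. apply IHn. intros; apply H; lia.
    + revert E. apply H. lia. Qed.
Lemma prodf_ext n f g : (forall k, f k = g k) -> prodf n f = prodf n g.
Proof. intros H; induction n; simpl; auto. Qed.
Definition env A v := map (fun i => nth i v 0) (seq 0 A).
Definition xall (A : nat) (bnd body : ex) :=
  ER (xc 1) (xmul (EP 1) (EC body (EP 0 :: map (fun i => EP (S (S i))) (seq 0 A)))) bnd
     (map EP (seq 0 A)).
Lemma env_self : forall w, env (length w) w = w.
Proof. intros w. unfold env. apply nth_ext with (d:=0) (d':=0).
  - rewrite length_map, length_seq; auto.
  - intros n Hn. rewrite length_map, length_seq in Hn.
    rewrite <- (nth_nth_nth_map _ _ _ (dn:=0)) by (left; rewrite length_seq; auto). rewrite seq_nth by auto. reflexivity.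
Qed.
Lemma den_xall A bnd body v :
  den (xall A bnd body) v = prodf (den bnd v) (fun k => den body (k :: env A v)).
Proof. unfold xall. cbn [den prf map nth]. rewrite map_map. cbn [den prf map nth]. fold (env A v).
  induction (den bnd v); cbn [den prf map nth]. apply den_xc.
  rewrite den_xmul. cbn [den prf map nth]. rewrite IHn. cbn [prodf]. f_equal. f_equal. f_equal.
  rewrite map_map. cbn [den prf map nth].
  assert (length (env A v) = A) by (unfold env; rewrite length_map, length_seq; auto).
  change (map (fun x => nth x (env A v) 0) (seq 0 A)) with (env A (env A v)).
  rewrite <- H at 1. apply env_self. Qed.
Arguments xall : simpl never.

Ltac okt := repeat (cbn [okx]; match goal with
   | |- _ /\ _ => split | |- True => exact I | _ => first [assumption | eauto 40 with okdb] end).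
Lemma ok_EP i : okx (EP i). Proof. exact I. Qed.
Lemma ok_EZ : okx EZ. Proof. exact I. Qed.
Lemma ok_ES : okx ES. Proof. exact I. Qed.
#[export] Hint Resolve ok_EP ok_EZ ok_ES : okdb.
#[export] Hint Extern 1 (okx _) => progress cbn [okx] : okdb.
#[export] Hint Extern 1 (_ /\ _) => split : okdb.
#[export] Hint Extern 1 True => exact I : okdb.
Lemma ok_xc n : okx (xc n). Proof. induction n; simpl; auto. Qed.
#[export] Hint Resolve ok_xc : okdb.
Lemma ok_xadd a b : okx a -> okx b -> okx (xadd a b).
Proof. unfold xadd; intros; okt. Qed.
#[export] Hint Resolve ok_xadd : okdb.
Lemma ok_xmul a b : okx a -> okx b -> okx (xmul a b).
Proof. unfold xmul; intros; okt. Qed.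
#[export] Hint Resolve ok_xmul : okdb.
Lemma ok_xpred a : okx a -> okx (xpred a).
Proof. unfold xpred; intros; okt. Qed.
#[export] Hint Resolve ok_xpred : okdb.
Lemma ok_xsub a b : okx a -> okx b -> okx (xsub a b).
Proof. unfold xsub; intros; okt. Qed.
#[export] Hint Resolve ok_xsub : okdb.
Lemma ok_xnot a : okx a -> okx (xnot a).
Proof. unfold xnot; intros; okt. Qed.
#[export] Hint Resolve ok_xnot : okdb.
Lemma ok_xlt a b : okx a -> okx b -> okx (xlt a b).
Proof. unfold xlt; intros; okt. Qed.
#[export] Hint Resolve ok_xlt : okdb.
Lemma ok_xpow2 a : okx a -> okx (xpow2 a).
Proof. unfold xpow2; intros; okt. Qed.
#[export] Hint Resolve ok_xpow2 : okdb.
Lemma ok_xmod2 a : okx a -> okx (xmod2 a).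
Proof. unfold xmod2; intros; okt. Qed.
#[export] Hint Resolve ok_xmod2 : okdb.
Lemma ok_xdiv2 a : okx a -> okx (xdiv2 a).
Proof. unfold xdiv2; intros; okt. Qed.
#[export] Hint Resolve ok_xdiv2 : okdb.
Lemma ok_xtb a b : okx a -> okx b -> okx (xtb a b).
Proof. unfold xtb; intros; okt. Qed.
#[export] Hint Resolve ok_xtb : okdb.
Lemma ok_xall A bnd body : okx bnd -> okx body -> okx (xall A bnd body).
Proof. unfold xall; intros; okt.
  all: repeat split; auto; induction (seq 0 A); simpl; auto. Qed.
#[export] Hint Resolve ok_xall : okdb.

Fixpoint tri (m : nat) : nat := match m with 0 => 0 | S k => tri k + S k end.
Definition xT a := ER EZ (xadd (EP 1) (EC ES [EP 0])) a [].
Lemma den_xT a v : den (xT a) v = tri (den a v).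
Proof. unfold xT. cbn [den prf map nth]. induction (den a v); cbn [den prf map nth tri]; auto.
  rewrite den_xadd. cbn [den prf map nth]. rewrite IHn. reflexivity. Qed.
Lemma ok_xT a : okx a -> okx (xT a).
Proof. unfold xT; intros; okt. Qed.
Arguments xT : simpl never.
#[export] Hint Resolve ok_xT : okdb.

Lemma to_nat_tri x y : to_nat (x, y) = y + tri (y + x).
Proof. unfold to_nat. f_equal. induction (y + x); simpl; auto. simpl in IHn. rewrite IHn. lia. Qed.
Lemma tri_mono m n : m <= n -> tri m <= tri n.
Proof. induction 1; simpl; lia. Qed.

Definition csum (n : nat) := fst (of_nat n) + snd (of_nat n).
Lemma csum_spec n : tri (csum n) <= n < tri (S (csum n)) /\ n = snd (of_nat n) + tri (csum n).
Proof. unfold csum. pose proof (cancel_to_of n). destruct (of_nat n) as [x y]. simpl.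
  rewrite to_nat_tri in H. replace (x + y) with (y + x) by lia. simpl. lia. Qed.

Definition fcs := xnot (xlt (EP 1) (xT (EC ES [EP 0]))).
Definition xcs a := EC (EM fcs (fun v => csum (nth 0 v 0))) [a].
Lemma den_xcs a v : den (xcs a) v = csum (den a v).
Proof. reflexivity. Qed.
Lemma ok_xcs a : okx a -> okx (xcs a).
Proof. unfold xcs. cbn [okx]. intros Ha. split; [|auto]. split.
  - unfold fcs. okt.
  - intros v. unfold fcs. rewrite !den_xnot. pose proof (den_xlt (EP 1) (xT (EC ES [EP 0])) (csum (nth 0 v 0) :: v)).
    split.
    + rewrite den_xT in H. cbn [den nth map] in H. destruct (csum_spec (nth 0 v 0)).
      assert (HH := proj2 H (proj2 H0)). lia.
    + intros m Hm. pose proof (den_xlt (EP 1) (xT (EC ES [EP 0])) (m :: v)).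
      rewrite den_xT in H0. cbn [den nth map] in H0. destruct (csum_spec (nth 0 v 0)).
      assert (tri (S m) <= tri (csum (nth 0 v 0))) by (apply tri_mono; lia).
      destruct (Nat.eq_dec (den (xlt (EP 1) (xT (EC ES [EP 0]))) (m :: v)) 0) as [E|E].
      * rewrite den_xnot, E. lia. * apply H0 in E. lia.
Qed.
Arguments xcs : simpl never.
#[export] Hint Resolve ok_xcs : okdb.

Definition xsnd a := xsub a (xT (xcs a)).
Definition xfst a := xsub (xcs a) (xsnd a).
Lemma den_xsnd a v : den (xsnd a) v = snd (of_nat (den a v)).
Proof. unfold xsnd. rewrite den_xsub, den_xT, den_xcs. destruct (csum_spec (den a v)). lia. Qed.
Lemma den_xfst a v : den (xfst a) v = fst (of_nat (den a v)).
Proof. unfold xfst. rewrite den_xsub, den_xsnd, den_xcs. unfold csum. lia. Qed.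
Lemma ok_xsnd a : okx a -> okx (xsnd a). Proof. unfold xsnd; eauto with okdb. Qed.
Lemma ok_xfst a : okx a -> okx (xfst a). Proof. unfold xfst; eauto using ok_xsnd with okdb. Qed.
Arguments xsnd : simpl never.
Arguments xfst : simpl never.
#[export] Hint Resolve ok_xsnd ok_xfst : okdb.
Definition xle a b := xlt a (EC ES [b]).
Lemma den_xle a b v : den (xle a b) v <> 0 <-> den a v <= den b v.
Proof. unfold xle. rewrite den_xlt. cbn [den nth map]. lia. Qed.
Lemma ok_xle a b : okx a -> okx b -> okx (xle a b). Proof. unfold xle; intros; okt. Qed.
Arguments xle : simpl never.
#[export] Hint Resolve ok_xle : okdb.

Section Main.
Variables (eD eR : code) (FD FR : nat -> nat -> nat -> nat).
Definition cD := CComp eD [CProj 0; CProj 1; CProj 2].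
Definition cR := CComp eR [CProj 0; CProj 1; CProj 2].
Definition FDv (v : list nat) := FD (nth 0 v 0) (nth 1 v 0) (nth 2 v 0).
Definition FRv (v : list nat) := FR (nth 0 v 0) (nth 1 v 0) (nth 2 v 0).
Hypothesis HD : TOT cD FDv.
Hypothesis HR : TOT cR FRv.

Definition xD i j p := EC (EK cD FDv) [i; j; p].
Definition xR i j p := EC (EK cR FRv) [i; j; p].
Lemma den_xD i j p v : den (xD i j p) v = FD (den i v) (den j v) (den p v).
Proof. reflexivity. Qed.
Lemma den_xR i j p v : den (xR i j p) v = FR (den i v) (den j v) (den p v).
Proof. reflexivity. Qed.
Lemma ok_xD i j p : okx i -> okx j -> okx p -> okx (xD i j p).
Proof. unfold xD; intros; cbn [okx]; intuition. Qed.
Lemma ok_xR i j p : okx i -> okx j -> okx p -> okx (xR i j p).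
Proof. unfold xR; intros; cbn [okx]; intuition. Qed.
Arguments xD : simpl never.
Arguments xR : simpl never.
#[local] Hint Resolve ok_xD ok_xR : okdb.

Definition Nn r := (1 - Nat.b2n (Nat.odd (fst (of_nat r)))) * Nat.div2 (fst (of_nat r)).
Definition Dd r := S (snd (of_nat r)).
Definition xNn r := xmul (xnot (xmod2 (xfst r))) (xdiv2 (xfst r)).
Definition xDd r := EC ES [xsnd r].
Lemma den_xNn r v : den (xNn r) v = Nn (den r v).
Proof. unfold xNn, Nn. rewrite den_xmul, den_xnot, den_xmod2, den_xdiv2, den_xfst. auto. Qed.
Lemma den_xDd r v : den (xDd r) v = Dd (den r v).
Proof. unfold xDd, Dd. cbn [den map nth]. rewrite den_xsnd. auto. Qed.
Lemma ok_xNn r : okx r -> okx (xNn r). Proof. unfold xNn; intros; okt. Qed.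
Lemma ok_xDd r : okx r -> okx (xDd r). Proof. unfold xDd; intros; okt. Qed.
Arguments xNn : simpl never.
Arguments xDd : simpl never.
#[local] Hint Resolve ok_xNn ok_xDd : okdb.

Definition FarP L m n := ~ (Nn (FD m n (L + 2)) * 2 ^ L < Dd (FD m n (L + 2))).
Definition xfar Lx mx nx :=
  xnot (xlt (xmul (xNn (xD mx nx (xadd Lx (xc 2)))) (xpow2 Lx)) (xDd (xD mx nx (xadd Lx (xc 2))))).
Lemma den_xfar Lx mx nx v : den (xfar Lx mx nx) v <> 0 <-> FarP (den Lx v) (den mx v) (den nx v).
Proof. unfold xfar, FarP. rewrite den_xnot.
  pose proof (den_xlt (xmul (xNn (xD mx nx (xadd Lx (xc 2)))) (xpow2 Lx)) (xDd (xD mx nx (xadd Lx (xc 2)))) v) as H.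
  rewrite den_xmul, den_xNn, den_xDd, den_xpow2, !den_xD, den_xadd, den_xc in H.
  split.
  - intros H1 H2. apply H in H2. lia.
  - intros H1 H2. apply H1. apply H. lia.
Qed.
Lemma ok_xfar a b c : okx a -> okx b -> okx c -> okx (xfar a b c). Proof. unfold xfar; intros; okt. Qed.
Arguments xfar : simpl never.
#[local] Hint Resolve ok_xfar : okdb.

Definition okE := xall 3 (EP 0) (xadd (xnot (xtb (EP 2) (EP 0))) (xfar (EP 3) (EP 0) (EP 1))).
Definition stepM := xadd (EP 1) (xmul (xnot (xnot okE)) (xpow2 (EP 0))).
Definition xmask Lx nx := ER EZ stepM nx [Lx].
Definition mk L n := prf (fun _ => 0) (den stepM) n [L].
Lemma den_xmask Lx nx v : den (xmask Lx nx) v = mk (den Lx v) (den nx v).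
Proof. reflexivity. Qed.
Lemma ok_xmask a b : okx a -> okx b -> okx (xmask a b).
Proof. unfold xmask, stepM, okE; intros; okt. Qed.
Arguments xmask : simpl never.
#[local] Hint Resolve ok_xmask : okdb.

Lemma mk_S L n : mk L (S n) = mk L n +
  (if (1 - (1 - prodf n (fun m => (1 - Nat.b2n (Nat.testbit (mk L n) m)) +
        den (xfar (EP 3) (EP 0) (EP 1)) [m; n; mk L n; L]))) =? 0 then 0 else 2 ^ n).
Proof. unfold mk at 1. cbn [prf]. fold (mk L n). unfold stepM.
  rewrite den_xadd, den_xmul, !den_xnot, den_xpow2. unfold okE. rewrite den_xall.
  cbn [den nth map]. unfold env. cbn [seq map nth].
  erewrite (prodf_ext). 2:{ intros k. rewrite den_xadd, den_xnot, den_xtb. cbn [den nth]. reflexivity. }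
  destruct (_ =? 0) eqn:E. apply Nat.eqb_eq in E. rewrite E. lia.
  apply Nat.eqb_neq in E. assert (1 - (1 - _) = 1) as ->. 2: lia. lia.
Qed.

Lemma okprod_iff L n : prodf n (fun m => (1 - Nat.b2n (Nat.testbit (mk L n) m)) +
        den (xfar (EP 3) (EP 0) (EP 1)) [m; n; mk L n; L]) <> 0 <->
  forall m, m < n -> Nat.testbit (mk L n) m = true -> FarP L m n.
Proof. rewrite prodf_nz. split.
  - intros H m Hm Hb. specialize (H m Hm). rewrite Hb in H. cbn [Nat.b2n] in H.
    pose proof (proj1 (den_xfar (EP 3) (EP 0) (EP 1) [m; n; mk L n; L])) as HH.
    cbn [den nth] in HH. apply HH. lia.
  - intros H m Hm. destruct (Nat.testbit (mk L n) m) eqn:E.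
    + cbn [Nat.b2n]. pose proof (proj2 (den_xfar (EP 3) (EP 0) (EP 1) [m; n; mk L n; L])).
      cbn [den nth] in H0. specialize (H0 (H m Hm E)). lia.
    + cbn [Nat.b2n]. lia.
Qed.

Lemma bit_add_low a n m c : a < 2 ^ n -> m < n -> Nat.testbit (a + c * 2 ^ n) m = Nat.testbit a m.
Proof. intros Ha Hm. rewrite <- (Nat.mod_pow2_bits_low _ n) by auto.
  rewrite Nat.Div0.mod_add. rewrite Nat.mod_small by auto. auto. Qed.
Lemma bit_add_at a n (c : bool) : a < 2 ^ n -> Nat.testbit (a + Nat.b2n c * 2 ^ n) n = c.
Proof. intros Ha. apply (Nat.testbit_unique _ _ _ a 0); auto; lia. Qed.

Definition okv L n := prodf n (fun m => (1 - Nat.b2n (Nat.testbit (mk L n) m)) +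
        den (xfar (EP 3) (EP 0) (EP 1)) [m; n; mk L n; L]).
Lemma mk_S' L n : mk L (S n) = mk L n + Nat.b2n (negb (okv L n =? 0)) * 2 ^ n.
Proof. rewrite mk_S. fold (okv L n). destruct (okv L n) as [|k]; [replace (1 - (1 - 0)) with 0 by lia | replace (1 - (1 - S k)) with 1 by lia]; cbn [Nat.eqb negb Nat.b2n]; lia. Qed.

Lemma mk_lt L n : mk L n < 2 ^ n.
Proof. induction n. unfold mk; cbn [prf Nat.pow]; lia. rewrite mk_S'. rewrite Nat.pow_succ_r'.
  destruct (negb _); cbn [Nat.b2n]; lia. Qed.

Lemma mk_stable L n m : m < n -> Nat.testbit (mk L n) m = Nat.testbit (mk L (S m)) m.
Proof. induction n; intros Hm. lia. destruct (Nat.eq_dec m n). subst; auto.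
  rewrite mk_S'. rewrite bit_add_low by (apply mk_lt || lia). apply IHn; lia. Qed.

Definition NetP L n := Nat.testbit (mk L (S n)) n = true.
Lemma NetP_okv L n : NetP L n <-> okv L n <> 0.
Proof. unfold NetP. rewrite mk_S'. rewrite bit_add_at by apply mk_lt.
  destruct (okv L n); cbn; split; intros; congruence || lia. Qed.
Lemma Net_char L n : NetP L n <-> forall m, m < n -> NetP L m -> FarP L m n.
Proof. rewrite NetP_okv. unfold okv. rewrite okprod_iff. unfold NetP.
  split; intros H m Hm; specialize (H m Hm); rewrite mk_stable in * by auto; auto. Qed.

Definition xNet Lx nx := xtb (xmask Lx (EC ES [nx])) nx.
Lemma den_xNet Lx nx v : den (xNet Lx nx) v <> 0 <-> NetP (den Lx v) (den nx v).
Proof. unfold xNet, NetP. rewrite den_xtb, den_xmask. cbn [den nth map].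
  destruct (Nat.testbit _ _); cbn; split; intros; congruence || lia. Qed.

Definition bodyM := xnot (xall 4 (EC ES [xsnd (EP 2)]) (xnot (xR (EP 2) (EP 1) (EP 0)))).
Definition BadE := xall 3 (EC ES [xfst (EP 1)]) bodyM.
Definition rE := xD (EP 2) (xfst (EP 0)) (xsnd (EP 1)).
Definition DeepE := xnot (xlt (xadd (xmul (xmul (xNn rE) (xpow2 (xfst (EP 1)))) (xpow2 (xsnd (EP 0))))
                                    (xmul (xDd rE) (xpow2 (xsnd (EP 0)))))
                              (xmul (xDd rE) (xpow2 (xfst (EP 1))))).
Definition bodyK := xadd BadE DeepE.
Definition Pex := xmul (xNet (xadd (xfst (EP 0)) (xc 4)) (EP 1))
                   (xmul (xle (xfst (EP 0)) (xsnd (EP 0))) (xall 2 (xfst (EP 0)) bodyK)).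

Lemma ok_Pex : okx Pex.
Proof. unfold Pex, bodyK, BadE, bodyM, DeepE, rE, xNet.
  repeat (match goal with
    | |- okx (xmul _ _) => apply ok_xmul | |- okx (xadd _ _) => apply ok_xadd
    | |- okx (xnot _) => apply ok_xnot | |- okx (xlt _ _) => apply ok_xlt
    | |- okx (xpow2 _) => apply ok_xpow2 | |- okx (xtb _ _) => apply ok_xtb
    | |- okx (xall _ _ _) => apply ok_xall | |- okx (xfst _) => apply ok_xfst
    | |- okx (xsnd _) => apply ok_xsnd | |- okx (xle _ _) => apply ok_xle
    | |- okx (xD _ _ _) => apply ok_xD | |- okx (xR _ _ _) => apply ok_xR
    | |- okx (xNn _) => apply ok_xNn | |- okx (xDd _) => apply ok_xDd
    | |- okx (xmask _ _) => apply ok_xmask | |- okx (xc _) => apply ok_xc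
    | |- okx (EP _) => exact I
    | |- okx (EC _ _) => cbn [okx] | |- _ /\ _ => split | |- True => exact I end). Qed.

Definition BadP k b s := forall m, m < S b -> exists t', t' < S s /\ FR k m t' <> 0.
Definition DeepNotP n k b s :=
  let r := FD n (fst (of_nat k)) s in let j := snd (of_nat k) in
  ~ (Nn r * 2 ^ b * 2 ^ j + Dd r * 2 ^ j < Dd r * 2 ^ b).
Definition PP n b s := NetP (b + 4) n /\ b <= s /\ forall k, k < b -> BadP k b s \/ DeepNotP n k b s.

Lemma den_bodyM m k t n : den bodyM [m; k; t; n] <> 0 <->
   exists t', t' < S (snd (of_nat t)) /\ FR k m t' <> 0.
Proof. unfold bodyM. rewrite den_xnot, den_xall. cbn [den nth map]. rewrite den_xsnd. cbn [den nth].
  unfold env; cbn [seq map nth].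
  split.
  - intros H. assert (prodf (S (snd (of_nat t))) (fun k0 => den (xnot (xR (EP 2) (EP 1) (EP 0))) [k0; m; k; t; n]) = 0) as H0 by lia.
    apply NNPP. intros Hn. revert H0. apply prodf_nz. intros t' Ht'. rewrite den_xnot, den_xR. cbn [den nth].
    intros E. apply Hn. exists t'. split; auto. lia.
  - intros [t' [Ht' HF]]. enough (prodf (S (snd (of_nat t))) (fun k0 => den (xnot (xR (EP 2) (EP 1) (EP 0))) [k0; m; k; t; n]) = 0) by lia.
    apply NNPP. intros Hn. apply (proj1 (prodf_nz _ _) Hn t' Ht').
    rewrite den_xnot, den_xR. cbn [den nth]. lia.
Qed.

Lemma den_BadE k t n : den BadE [k; t; n] <> 0 <-> BadP k (fst (of_nat t)) (snd (of_nat t)).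
Proof. unfold BadE. rewrite den_xall, prodf_nz. cbn [den nth map]. rewrite den_xfst. cbn [den nth].
  unfold env; cbn [seq map nth]. unfold BadP. split; intros H m Hm; specialize (H m Hm);
  apply den_bodyM in H || apply den_bodyM; auto. Qed.

Lemma den_DeepE k t n : den DeepE [k; t; n] <> 0 <-> DeepNotP n k (fst (of_nat t)) (snd (of_nat t)).
Proof. unfold DeepE, DeepNotP, rE. rewrite den_xnot.
  match goal with |- context [den (xlt ?A ?B) _] => pose proof (den_xlt A B [k; t; n]) as H end.
  rewrite !den_xadd, !den_xmul, den_xNn, den_xDd, !den_xpow2, den_xD, !den_xfst, !den_xsnd in H.
  cbn [den nth] in H. cbv zeta.
  split.
  - intros H1 H2. apply H in H2. lia.
  - intros H1 H2. apply H1. apply H. lia.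
Qed.

Lemma den_Pex t n : den Pex [t; n] <> 0 <-> PP n (fst (of_nat t)) (snd (of_nat t)).
Proof. unfold Pex, PP. rewrite !den_xmul. rewrite <- !Nat.neq_mul_0.
  rewrite den_xNet, den_xle, den_xall, prodf_nz. rewrite den_xadd, den_xc, !den_xfst, den_xsnd. cbn [den nth].
  unfold env; cbn [seq map nth].
  assert (forall k, den bodyK [k; t; n] <> 0 <-> BadP k (fst (of_nat t)) (snd (of_nat t)) \/ DeepNotP n k (fst (of_nat t)) (snd (of_nat t))).
  { intros k. unfold bodyK. rewrite den_xadd, <- (den_BadE k t n), <- den_DeepE. lia. }
  split; intros (H1 & H2 & H3); repeat split; auto; intros k Hk; apply H; auto. Qed.

Definition Wcode := CMu (cmp (xnot Pex)).
Lemma least_nat (P : nat -> Prop) : (exists n, P n) -> exists n, P n /\ forall m, m < n -> ~ P m.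
Proof. intros [n Hn]. revert Hn. induction n as [n IH] using lt_wf_ind. intros Hn.
  destruct (classic (exists m, m < n /\ P m)) as [[m [Hm Pm]]|H].
  - apply (IH m Hm Pm).
  - exists n. split; auto. intros m Hm Pm. apply H; eauto. Qed.

Lemma Wcode_spec n : (exists y, eval Wcode [n] y) <-> exists b s, PP n b s.
Proof. assert (Hok : TOT (cmp (xnot Pex)) (den (xnot Pex))) by (apply cmp_ok, ok_xnot, ok_Pex).
  split.
  - intros [y Hy]. inversion Hy; subst. pose proof (Hok (y :: [n])).
    pose proof (eval_det _ _ _ H0 _ H). rewrite den_xnot in H2.
    exists (fst (of_nat y)), (snd (of_nat y)). apply den_Pex. lia.
  - intros [b [s H]]. destruct (least_nat (fun t => den Pex [t; n] <> 0)) as [t [Ht Hl]].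
    { exists (to_nat (b, s)). apply den_Pex. rewrite cancel_of_to. auto. }
    exists t. constructor.
    + pose proof (Hok [t; n]). rewrite den_xnot in H0. replace (1 - den Pex [t; n]) with 0 in H0 by lia. auto.
    + intros m Hm. specialize (Hl m Hm). exists 0. pose proof (Hok [m; n]). rewrite den_xnot in H0.
      replace (1 - den Pex [m; n]) with 1 in H0 by lia. auto.
Qed.
End Main.

Section Real.
Open Scope R_scope.
Lemma div_lt_inv (a D P : R) : 0 < D -> 0 < P -> (a / D < / P <-> a * P < D).
Proof. intros HD HP. split; intros H.
  - apply Rmult_lt_compat_r with (r := D * P) in H; [|nra].
    replace (a / D * (D * P)) with (a * P) in H by (field; lra).
    replace (/ P * (D * P)) with D in H by (field; lra). auto.
  - apply Rmult_lt_reg_r with (r := D * P); [nra|].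
    replace (a / D * (D * P)) with (a * P) by (field; lra).
    replace (/ P * (D * P)) with D by (field; lra). auto.
Qed.

Lemma div_add_lt_inv (a D B J : R) : 0 < D -> 0 < B -> 0 < J ->
  (a / D + / B < / J <-> a * B * J + D * J < D * B).
Proof. intros HD HB HJ. split; intros H.
  - apply Rmult_lt_compat_r with (r := D * B * J) in H; [|apply Rmult_lt_0_compat; nra].
    replace ((a / D + / B) * (D * B * J)) with (a * B * J + D * J) in H by (field; lra).
    replace (/ J * (D * B * J)) with (D * B) in H by (field; lra). auto.
  - apply Rmult_lt_reg_r with (r := D * B * J); [apply Rmult_lt_0_compat; nra|].
    replace ((a / D + / B) * (D * B * J)) with (a * B * J + D * J) by (field; lra).
    replace (/ J * (D * B * J)) with (D * B) by (field; lra). auto.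
Qed.

Lemma INR_pow2 n : INR (2 ^ n) = 2 ^ n.
Proof. rewrite pow_INR. f_equal. Qed.

Lemma pow2_pos n : 0 < 2 ^ n.
Proof. apply pow_lt; lra. Qed.

Lemma inv_pow2_S n : / 2 ^ (S n) = / 2 ^ n / 2.
Proof. simpl. field. apply pow_nonzero; lra. Qed.

Lemma inv_pow2_le m n : (m <= n)%nat -> / 2 ^ n <= / 2 ^ m.
Proof. intros H. apply Rinv_le_contravar. apply pow2_pos. apply Rle_pow; lra || auto. Qed.

Lemma inv_pow2_small (e : R) : 0 < e -> exists N, / 2 ^ N < e.
Proof. intros He. destruct (pow_lt_1_zero (/ 2)) with (y := e) as [N HN]; auto.
  rewrite Rabs_pos_eq; lra. exists N. specialize (HN N (le_n _)).
  rewrite Rabs_pos_eq in HN. rewrite pow_inv in HN. auto. apply pow_le. lra. Qed.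

Lemma inv_pow2_mono m n : (m < n)%nat -> / 2 ^ n < / 2 ^ m.
Proof. intros H. apply Rinv_lt_contravar. apply Rmult_lt_0_compat; apply pow2_pos.
  apply Rlt_pow; lra || auto. Qed.

Lemma log_scale (d : R) : 0 < d -> d <= / 2 -> exists b, / 2 ^ (b + 2) < d /\ d <= / 2 ^ (b + 1).
Proof. intros Hd Hd2. destruct (inv_pow2_small d Hd) as [N HN].
  assert (forall N, / 2 ^ N < d -> exists b, / 2 ^ (b + 2) < d /\ d <= / 2 ^ (b + 1)) as G.
  2: apply (G N HN).
  clear N HN. intros N. induction N as [N IH] using lt_wf_ind. intros HN.
  destruct N as [|[|N]].
  - simpl in HN. lra.
  - simpl in HN. lra.
  - destruct (Rlt_le_dec (/ 2 ^ (S N)) d) as [H|H].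
    + apply (IH (S N)); auto.
    + exists N. replace (N + 2)%nat with (S (S N)) by lia. replace (N + 1)%nat with (S N) by lia. auto.
Qed.

Variables (X : Metric_Space) (q : nat -> Base X) (eD eR : code) (FD FR : nat -> nat -> nat -> nat).
Hypothesis HFD : forall i j p, Rabs (decodeQ (FD i j p) - dist X (q i) (q j)) <= / 2 ^ p.

Definition rho i j p := INR (Nn (FD i j p)) / INR (Dd (FD i j p)).

Lemma rho_bound i j p : Rabs (rho i j p - dist X (q i) (q j)) <= / 2 ^ p.
Proof. pose proof (HFD i j p) as H. unfold rho, Nn, Dd, decodeQ in *.
  destruct (of_nat (FD i j p)) as [a b]. cbn [fst snd] in *.
  unfold zigzag in H. rewrite <- Nat.negb_even. destruct (Nat.even a) eqn:E; cbn [negb Nat.b2n].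
  - rewrite Nat.sub_0_r, Nat.mul_1_l. rewrite <- INR_IZR_INZ in H. auto.
  - replace ((1 - 1) * Nat.div2 a)%nat with 0%nat by lia.
    assert (0 <= INR (S (Nat.div2 a)) / INR (S b)).
    { unfold Rdiv. apply Rmult_le_pos. apply pos_INR. left. apply Rinv_0_lt_compat, lt_0_INR. lia. }
    rewrite opp_IZR, <- INR_IZR_INZ in H.
    replace (- INR (S (Nat.div2 a)) / INR (S b)) with (- (INR (S (Nat.div2 a)) / INR (S b))) in H by (unfold Rdiv; ring).
    pose proof (dist_pos X (q i) (q j)).
    replace (INR 0 / INR (S b)) with 0 by (simpl; unfold Rdiv; ring).
    rewrite Rabs_left1 in H by lra. rewrite Rabs_left1 by lra. lra.
Qed.

Lemma rho_lo i j p : dist X (q i) (q j) - / 2 ^ p <= rho i j p.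
Proof. pose proof (rho_bound i j p). pose proof (Rle_abs (- (rho i j p - dist X (q i) (q j)))).
  rewrite Rabs_Ropp in H0. lra. Qed.
Lemma rho_hi i j p : rho i j p <= dist X (q i) (q j) + / 2 ^ p.
Proof. pose proof (rho_bound i j p). pose proof (Rle_abs (rho i j p - dist X (q i) (q j))). lra. Qed.

Lemma Dd_pos r : 0 < INR (Dd r).
Proof. unfold Dd. apply lt_0_INR. lia. Qed.

Lemma far_real L m n : FarP FD L m n -> / 2 ^ L <= rho m n (L + 2).
Proof. unfold FarP, rho. intros H. apply Rnot_lt_le. rewrite div_lt_inv by (apply Dd_pos || apply pow2_pos).
  intros H'. apply H. apply INR_lt. rewrite mult_INR, INR_pow2. auto. Qed.
Lemma nfar_real L m n : ~ FarP FD L m n -> rho m n (L + 2) < / 2 ^ L.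
Proof. unfold FarP, rho. intros H. apply NNPP in H.
  rewrite div_lt_inv by (apply Dd_pos || apply pow2_pos).
  apply lt_INR in H. rewrite mult_INR, INR_pow2 in H. auto. Qed.

Lemma deep_real n k b s : DeepNotP FD n k b s <->
  ~ (rho n (fst (of_nat k)) s + / 2 ^ b < / 2 ^ (snd (of_nat k))).
Proof. unfold DeepNotP, rho. cbv zeta.
  rewrite div_add_lt_inv by (apply Dd_pos || apply pow2_pos).
  split; intros H H'; apply H.
  - apply INR_lt. rewrite plus_INR, !mult_INR, !INR_pow2. auto.
  - apply lt_INR in H'. rewrite plus_INR, !mult_INR, !INR_pow2 in H'. auto. Qed.

Lemma pinv_add a c : / 2 ^ (a + c) = / 2 ^ a * / 2 ^ c.
Proof. rewrite pow_add. rewrite Rinv_mult. auto. Qed.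

Lemma net_sep L m n : NetP eD FD L m -> NetP eD FD L n -> m <> n ->
  3 / 4 * / 2 ^ L <= dist X (q m) (q n).
Proof. intros Hm Hn Hne.
  assert (forall m n, (m < n)%nat -> NetP eD FD L m -> NetP eD FD L n -> 3 / 4 * / 2 ^ L <= dist X (q m) (q n)).
  { clear m n Hm Hn Hne. intros m n Hlt Hm Hn. pose proof (proj1 (Net_char eD FD L n) Hn m Hlt Hm) as Hf. apply far_real in Hf. clear Hn. rename Hf into Hn.
    pose proof (rho_hi m n (L + 2)). rewrite pinv_add in H.
    replace (/ 2 ^ 2) with (/ 4) in H by (simpl; field). lra. }
  destruct (Nat.lt_total m n) as [H1|[H1|H1]]; auto. lia. rewrite dist_sym. auto. Qed.

Lemma net_cover L i : exists m, NetP eD FD L m /\ dist X (q m) (q i) < 5 / 4 * / 2 ^ L.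
Proof. destruct (classic (NetP eD FD L i)) as [H|H].
  - exists i. split; auto. assert (dist X (q i) (q i) = 0) by (apply dist_refl; auto).
    pose proof (pow2_pos L). assert (0 < / 2 ^ L) by (apply Rinv_0_lt_compat; auto). lra.
  - rewrite Net_char in H. apply not_all_ex_not in H. destruct H as [m H].
    apply imply_to_and in H. destruct H as [Hm H]. apply imply_to_and in H. destruct H as [Hnm H].
    exists m. split; auto. apply nfar_real in H. pose proof (rho_lo m i (L + 2)). rewrite pinv_add in H0.
    replace (/ 2 ^ 2) with (/ 4) in H0 by (simpl; field). lra. Qed.

Lemma fin_bound (Q : nat -> nat -> Prop) b :
  (forall k, (k < b)%nat -> exists S, forall s, (S <= s)%nat -> Q k s) ->
  exists S, forall k, (k < b)%nat -> forall s, (S <= s)%nat -> Q k s.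
Proof. induction b; intros H.
  - exists 0%nat. intros; lia.
  - destruct IHb as [S1 H1]. intros; apply H; lia.
    destruct (H b (Nat.lt_succ_diag_r b)) as [S2 H2].
    exists (S1 + S2)%nat. intros k Hk s Hs. destruct (Nat.eq_dec k b).
    + subst. apply H2. lia.
    + apply H1; lia. Qed.

Variables (C : Base X -> Prop) (I : nat -> Prop).
Hypothesis HI : forall k, I k <-> exists m, forall t, FR k m t = 0%nat.
Hypothesis HC : forall x, ~ C x <-> exists k, I k /\ basic_ball X q k x.
Hypothesis Hdense : dense_seq X q.
Hypothesis Hperf : perfect X.

Definition Dset n := exists b s, PP eD FD FR n b s.

Lemma dist_self x : dist X x x = 0.
Proof. apply dist_refl. auto. Qed.

Lemma dirA x : C x -> limit_point X q Dset x.
Proof. intros HCx eps Heps.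
  assert (Hm : Rmin (eps / 2) (/ 2) > 0) by (apply Rmin_Rgt_r; split; lra).
  destruct (Hperf x _ Hm) as [y [Hyx Hxy]].
  pose proof (Rmin_l (eps / 2) (/ 2)). pose proof (Rmin_r (eps / 2) (/ 2)).
  set (dl := dist X x y) in *.
  assert (Hdl : 0 < dl).
  { assert (Hd0 : 0 <= dl) by (apply Rge_le, dist_pos). destruct (Rle_lt_or_eq_dec 0 dl Hd0) as [Hl|Hl]; auto.
    exfalso. apply Hyx. symmetry. apply dist_refl. auto. }
  destruct (log_scale dl) as [b [Hb1 Hb2]]; auto. lra.
  assert (Hp5 : / 2 ^ (b + 5) > 0) by (apply Rinv_0_lt_compat, pow2_pos).
  destruct (Hdense y _ Hp5) as [i Hi].
  destruct (net_cover (b + 4) i) as [n [Hnet Hn]].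
  assert (E3 : / 2 ^ (b + 3) = / 2 ^ b / 8) by (rewrite pinv_add; simpl; field; try (apply pow_nonzero; lra)).
  assert (E4 : / 2 ^ (b + 4) = / 2 ^ b / 16) by (rewrite pinv_add; simpl; field; try (apply pow_nonzero; lra)).
  assert (E5 : / 2 ^ (b + 5) = / 2 ^ b / 32) by (rewrite pinv_add; simpl; field; try (apply pow_nonzero; lra)).
  assert (E2 : / 2 ^ (b + 2) = / 2 ^ b / 4) by (rewrite pinv_add; simpl; field; try (apply pow_nonzero; lra)).
  assert (E1 : / 2 ^ (b + 1) = / 2 ^ b / 2) by (rewrite pinv_add; simpl; field; try (apply pow_nonzero; lra)).
  assert (Hyn : dist X y (q n) < / 2 ^ b / 8).
  { pose proof (dist_tri X y (q n) (q i)). rewrite (dist_sym X (q i) (q n)) in H1. lra. }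
  assert (Hxn : dist X x (q n) <= dl + dist X y (q n)) by apply dist_tri.
  exists n. split; [|split].
  -
    assert (HQ : forall k, (k < b)%nat -> exists S, forall s, (S <= s)%nat ->
               BadP FR k b s \/ DeepNotP FD n k b s).
    { intros k Hk. destruct (classic (I k)) as [Ik|nIk].
      - exists (b + 3)%nat. intros s Hs. right. apply deep_real.
        assert (Hnb : ~ basic_ball X q k x).
        { intros Hbb. apply (proj2 (HC x)); eauto. }
        unfold basic_ball in Hnb. destruct (of_nat k) as [c j]. cbn [fst snd].
        apply Rnot_lt_le in Hnb. pose proof (rho_lo n c s) as R1.
        pose proof (dist_tri X x (q c) (q n)) as R2.
        pose proof (inv_pow2_le _ _ Hs) as R3. rewrite E3 in R3.
        assert (0 < / 2 ^ b) by (apply Rinv_0_lt_compat, pow2_pos). lra.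
      - assert (Hall : forall m, exists t, FR k m t <> 0%nat).
        { intros m. apply NNPP. intros Hn'. apply nIk. apply HI. exists m. intros t.
          apply NNPP. intros Ht. apply Hn'. eauto. }
        destruct (fin_bound (fun m s => exists t, (t < S s)%nat /\ FR k m t <> 0%nat) (S b)) as [S0 HS0].
        { intros m _. destruct (Hall m) as [t Ht]. exists t. intros s Hs. exists t. split; auto. lia. }
        exists S0. intros s Hs. left. intros m Hmm. apply HS0; auto. }
    destruct (fin_bound _ b HQ) as [S0 HS0].
    exists b, (S0 + b)%nat. split; [auto|split]. lia. intros k Hk. apply HS0; auto. lia.
  - intros E. rewrite E in Hyn. rewrite dist_sym in Hyn. fold dl in Hyn. lra.
  - lra.
Qed.

Lemma claim2 x b : exists e, 0 < e /\ forall n, NetP eD FD (b + 4) n -> q n = x \/ e <= dist X x (q n).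
Proof. set (L := (b + 4)%nat). assert (HL : 0 < / 2 ^ L) by (apply Rinv_0_lt_compat, pow2_pos).
  destruct (classic (exists n0, NetP eD FD L n0 /\ q n0 <> x /\ dist X x (q n0) < 3 / 8 * / 2 ^ L))
    as [[n0 [Hn0 [Hq0 Hd0]]]|Hno].
  - exists (dist X x (q n0)). split.
    + assert (Hd : 0 <= dist X x (q n0)) by (apply Rge_le, dist_pos).
      destruct (Rle_lt_or_eq_dec _ _ Hd) as [Hl|Hl]; auto. exfalso. apply Hq0. symmetry. apply dist_refl. auto.
    + intros n Hn. destruct (Nat.eq_dec n n0) as [->|Hne]. right; lra.
      destruct (classic (q n = x)) as [Hq|Hq]; [left; auto|right].
      apply Rnot_lt_le. intros Hlt. pose proof (net_sep L n n0 Hn Hn0 Hne).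
      pose proof (dist_tri X (q n) (q n0) x). rewrite (dist_sym X (q n) x) in H0. lra.
  - exists (3 / 8 * / 2 ^ L). split. lra. intros n Hn.
    destruct (classic (q n = x)) as [Hq|Hq]; [left; auto|right].
    apply Rnot_lt_le. intros Hlt. apply Hno. exists n. auto.
Qed.

Lemma claim2_all x B : exists e, 0 < e /\ forall b n, (b < B)%nat -> NetP eD FD (b + 4) n ->
   q n = x \/ e <= dist X x (q n).
Proof. induction B.
  - exists 1. split. lra. intros; lia.
  - destruct IHB as [e1 [He1 H1]]. destruct (claim2 x B) as [e2 [He2 H2]].
    exists (Rmin e1 e2). split. apply Rmin_Rgt_r; split; lra.
    intros b n Hb Hn. destruct (Nat.eq_dec b B) as [->|Hne].
    + destruct (H2 n Hn) as [H|H]; auto. right. pose proof (Rmin_r e1 e2). lra.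
    + destruct (H1 b n) as [H|H]; auto. lia. right. pose proof (Rmin_l e1 e2). lra.
Qed.

Lemma dirB x : ~ C x -> ~ limit_point X q Dset x.
Proof. intros HnC Hlim. destruct (proj1 (HC x) HnC) as [k [Hk Hball]].
  destruct (proj1 (HI k) Hk) as [m0 Hm0].
  unfold basic_ball in Hball. destruct (of_nat k) as [c j] eqn:Ek.
  set (mu := / 2 ^ j - dist X x (q c)).
  assert (Hmu : 0 < mu) by (unfold mu; lra).
  destruct (inv_pow2_small (mu / 4)) as [N HN]. lra.
  set (B0 := (N + k + m0 + 1)%nat).
  assert (HB0 : / 2 ^ B0 <= / 2 ^ N) by (apply inv_pow2_le; unfold B0; lia).
  assert (Cl1 : forall n b s, PP eD FD FR n b s -> (B0 <= b)%nat -> mu / 4 <= dist X x (q n)).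
  { intros n b s [Hnet [Hbs Hall]] Hb. apply Rnot_lt_le. intros Hlt.
    destruct (Hall k) as [Hbad|Hdeep]. unfold B0 in Hb; lia.
    - destruct (Hbad m0) as [t [Ht HF]]. unfold B0 in Hb; lia. apply HF. apply Hm0.
    - apply deep_real in Hdeep. rewrite Ek in Hdeep. cbn [fst snd] in Hdeep. apply Hdeep.
      pose proof (rho_hi n c s). pose proof (dist_tri X (q n) (q c) x).
      rewrite (dist_sym X (q n) x) in H0.
      assert (/ 2 ^ s <= / 2 ^ B0) by (apply inv_pow2_le; lia).
      assert (/ 2 ^ b <= / 2 ^ B0) by (apply inv_pow2_le; lia).
      unfold mu in *. lra. }
  destruct (claim2_all x B0) as [e [He Cl2]].
  assert (Heps : Rmin (mu / 4) e > 0) by (apply Rmin_Rgt_r; split; lra).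
  destruct (Hlim _ Heps) as [i [[b [s HP]] [Hqi Hdi]]].
  pose proof (Rmin_l (mu / 4) e). pose proof (Rmin_r (mu / 4) e).
  destruct (le_lt_dec B0 b) as [Hb|Hb].
  - pose proof (Cl1 i b s HP Hb). lra.
  - destruct HP as [Hnet _]. destruct (Cl2 b i Hb Hnet) as [H1|H1]. auto. lra.
Qed.

Lemma main_real x : C x <-> limit_point X q Dset x.
Proof. split. apply dirA. intros Hl. apply NNPP. intros Hn. apply (dirB x Hn Hl). Qed.
End Real.

Lemma lp_ext (X : Metric_Space) (q : nat -> Base X) (W1 W2 : nat -> Prop) x :
  (forall n, W1 n <-> W2 n) -> (limit_point X q W1 x <-> limit_point X q W2 x).
Proof. intros H. unfold limit_point. split; intros Hl eps He; destruct (Hl eps He) as [i Hi];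
  exists i; rewrite ?H in *; firstorder. Qed.

Theorem mainTheorem16 (X : Metric_Space) (q : nat -> Base X) (C : Base X -> Prop) :
  computable_metric_space X q ->
  perfect X ->
  pi01_jump X q C ->
  exists W : nat -> Prop, ce W /\
    (forall x : Base X, C x <-> limit_point X q W x).
Proof.
  intros [Hdense [eD HeD]] Hperf [I [[eR [HRtot HRI]] HC]].
  set (FD := fun i j p => proj1_sig (constructive_indefinite_description _ (HeD i j p))).
  assert (HFD : forall i j p, eval eD [i; j; p] (FD i j p) /\
      (Rabs (decodeQ (FD i j p) - dist X (q i) (q j)) <= / 2 ^ p)%R).
  { intros. unfold FD. destruct (constructive_indefinite_description _ _) as [r Hr]. exact Hr. }
  set (FR := fun i j p => proj1_sig (constructive_indefinite_description _ (HRtot i j p))).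
  assert (HFR : forall i j p, eval eR [i; j; p] (FR i j p)).
  { intros. unfold FR. destruct (constructive_indefinite_description _ _) as [r Hr]. exact Hr. }
  clearbody FD FR.
  assert (HD : TOT (cD eD) (FDv FD)).
  { intros v. unfold cD, FDv. econstructor. repeat constructor. apply HFD. }
  assert (HR : TOT (cR eR) (FRv FR)).
  { intros v. unfold cR, FRv. econstructor. repeat constructor. apply HFR. }
  exists (fun n => exists y, eval (Wcode eD eR FD FR) [n] y). split.
  - exists (Wcode eD eR FD FR). intros n. reflexivity.
  - intros x. rewrite (lp_ext X q _ (Dset eD FD FR)).
    2:{ intros n. apply Wcode_spec; auto. }
    apply main_real with (I := I).
    + intros. apply HFD.
    + intros k. rewrite HRI. split; intros [m Hm]; exists m; intros t; specialize (Hm t).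
      * eapply eval_det. apply HFR. auto.
      * rewrite <- Hm. apply HFR.
    + auto.
    + auto.
    + auto.
Qed.
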